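(* In the setting below, the curvature $R(a,b)=[\hat\nabla_a,\hat\nabla_b]-\hat\nabla_{\{a,b\}}$ of the preconnection $\hat\nabla$ satisfies, for $v,w,z\in\mathfrak g$ and $f,h,k\in C^\infty(N)$: $$R(v,w)({\rm d}z)=-\tfrac14{\rm d}[[v,w],z],\qquad R(v,w)({\rm d}h)=0,$$ $$R(v,h)({\rm d}z)=R(v,h)({\rm d}k)=0,\qquad R(f,h)({\rm d}z)=R(f,h)({\rm d}k)=0.$$
   Context: A Lie group with Lie algebra $\mathfrak g$ acts on a manifold $N$, with induced (Lie algebra) action $\xi\triangleright f$ on $C^\infty(N)$. On $C^\infty(N)\otimes S(\mathfrak g)\subset C^\infty(N\times\mathfrak g^* )$ the Poisson bracket is determined by $\{f,h\}=0$, $\{v,f\}=v\triangleright f$, $\{v,w\}=[v,w]$ ($f,h\in C^\infty(N)$, $v,w\in\mathfrak g$ viewed as linear functions on $\mathfrak g^*$). $\hat\nabla$ is the preconnection (i.e. $\hat\nabla_a(b\xi)=\{a,b\}\xi+b\hat\nabla_a\xi$, $\hat\nabla_{ab}=a\hat\nabla_b+b\hat\nabla_a$) determined by $\hat\nabla_v{\rm d}w=\frac12{\rm d}[v,w]$, $\hat\nabla_v{\rm d}h={\rm d}(v\triangleright h)$, $\hat\nabla_f{\rm d}w=0$, $\hat\nabla_f{\rm d}h=0$. *)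

(* Defs.v *)
From HB Require Import structures.
From mathcomp Require Import all_boot all_order all_algebra.
Set Implicit Arguments. Unset Strict Implicit. Unset Printing Implicit Defensive.
Import Order.TTheory GRing.Theory Num.Theory.
Local Open Scope ring_scope.

Definition lie_bracket (K : fieldType) (g : lmodType K) (br : g -> g -> g) :=
  [/\ forall (a : K) x y z, br (a *: x + y) z = a *: br x z + br y z,
      forall x y, br x y = - br y x &
      forall x y z, br x (br y z) + br y (br z x) + br z (br x y) = 0].

Definition lie_action (K : fieldType) (g : lmodType K) (C : comAlgType K)
    (br : g -> g -> g) (act : g -> C -> C) :=
  [/\ forall (a : K) v w f, act (a *: v + w) f = a *: act v f + act w f,
      forall (a : K) v f h, act v (a *: f + h) = a *: act v f + act v h,
      forall v f h, act v (f * h) = act v f * h + f * act v h &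
      forall v w f, act (br v w) f = act v (act w f) - act w (act v f)].

Definition poisson_bracket (K : fieldType) (A : comAlgType K) (pb : A -> A -> A) :=
  [/\ forall (k : K) a b c, pb (k *: a + b) c = k *: pb a c + pb b c,
      forall a b, pb a b = - pb b a,
      forall a b c, pb a (b * c) = pb a b * c + b * pb a c &
      forall a b c, pb a (pb b c) + pb b (pb c a) + pb c (pb a b) = 0].

(* [d : A -> Om] is a K-linear derivation into the A-module Om
   (exterior derivative into 1-forms). *)
Definition kderivation (K : fieldType) (A : comAlgType K) (Om : lmodType A)
    (d : A -> Om) :=
  (forall (k : K) a b, d (k *: a + b) = k%:A *: d a + d b) /\
  (forall a b, d (a * b) = a *: d b + b *: d a).

Definition preconnection (K : fieldType) (A : comAlgType K) (Om : lmodType A)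
    (pb : A -> A -> A) (nabla : A -> Om -> Om) :=
  [/\ forall a (xi eta : Om), nabla a (xi + eta) = nabla a xi + nabla a eta,
      forall a b (xi : Om), nabla a (b *: xi) = pb a b *: xi + b *: nabla a xi,
      forall a b (xi : Om), nabla (a * b) xi = a *: nabla b xi + b *: nabla a xi &
      forall (k : K) a b (xi : Om),
        nabla (k *: a + b) xi = k%:A *: nabla a xi + nabla b xi].

Definition curvature (K : fieldType) (A : comAlgType K) (Om : lmodType A)
    (pb : A -> A -> A) (nabla : A -> Om -> Om) (a b : A) (xi : Om) : Om :=
  nabla a (nabla b xi) - nabla b (nabla a xi) - nabla (pb a b) xi.

(* Main.v *)
Require Import Defs.
Set Warnings "-notation-overridden -ambiguous-paths".
From HB Require Import structures.
From mathcomp Require Import all_boot all_order all_algebra.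
From mathcomp Require Import ring lra.
Import Order.TTheory GRing.Theory Num.Theory.
Local Open Scope ring_scope.

Theorem proposition6p1p4
  (K : realFieldType) (g : lmodType K) (C : comAlgType K) (A : comAlgType K)
  (Om : lmodType A)
  (br : g -> g -> g) (act : g -> C -> C)
  (iC : {lrmorphism C -> A}) (ig : {linear g -> A})
  (pb : A -> A -> A) (d : A -> Om) (nabla : A -> Om -> Om) :
  lie_bracket br ->
  lie_action br act ->
  poisson_bracket pb ->
  (forall f h, pb (iC f) (iC h) = 0) ->
  (forall v f, pb (ig v) (iC f) = iC (act v f)) ->
  (forall v w, pb (ig v) (ig w) = ig (br v w)) ->
  kderivation d ->
  preconnection pb nabla ->
  (forall v w, nabla (ig v) (d (ig w)) = (2^-1 : K)%:A *: d (ig (br v w))) ->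
  (forall v h, nabla (ig v) (d (iC h)) = d (iC (act v h))) ->
  (forall f w, nabla (iC f) (d (ig w)) = 0) ->
  (forall f h, nabla (iC f) (d (iC h)) = 0) ->
  forall (v w z : g) (f h k : C),
  (curvature pb nabla (ig v) (ig w) (d (ig z))
        = - ((4^-1 : K)%:A *: d (ig (br (br v w) z))) /\
      curvature pb nabla (ig v) (ig w) (d (iC h)) = 0 /\
      curvature pb nabla (ig v) (iC h) (d (ig z)) = 0 /\
      curvature pb nabla (ig v) (iC h) (d (iC k)) = 0 /\
      curvature pb nabla (iC f) (iC h) (d (ig z)) = 0 /\
      curvature pb nabla (iC f) (iC h) (d (iC k)) = 0).
Proof.
move=> [brL brA brJ] [acL1 acL2 acD acB] [pbL pbA pbD pbJ] Hff Hvf Hvw [dL dD]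
  [nD nS nM nL] Nvw Nvh Nfw Nfh v w z f h k.
have idem (V : zmodType) (x : V) : x + x = x -> x = 0.
  by move=> H; apply: (@addrI _ x); rewrite addr0.
have nab0 a : nabla a 0 = 0 by apply: idem; rewrite -nD addr0.
have nabla0 xi : nabla 0 xi = 0.
  by have := nM 0 0 xi; rewrite mul0r !scale0r addr0.
have pb0 c : pb 0 c = 0.
  by apply: idem; rewrite -{1}[pb 0 c]scale1r -pbL scale1r addr0.
have pb1 a : pb a 1 = 0.
  by apply: idem; rewrite -{3}[1](mul1r 1) pbD mulr1 mul1r.
have pbK a (c : K) : pb a (c%:A) = 0.
  by rewrite pbA -[c%:A]addr0 pbL pb0 addr0 pbA pb1 oppr0 scaler0 oppr0.
have nabK a (c : K) xi : nabla a (c%:A *: xi) = c%:A *: nabla a xi.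
  by rewrite nS pbK scale0r add0r.
have dadd a b : d (a + b) = d a + d b.
  by have := dL 1 a b; rewrite !scale1r.
have d0 : d 0 = 0.
  by apply: idem; have := dL 1 0 0; rewrite !scale1r addr0 => <-.
have dN a : d (- a) = - d a.
  by have := dL (-1) a 0; rewrite addr0 d0 addr0 scaleN1r => ->; rewrite scaleNr scale1r scaleN1r.
rewrite /curvature; split; last split; last split; last split; last split.
- rewrite Hvw !Nvw !nabK !Nvw.
  have br0 y : br 0 y = 0.
    by apply: idem; have := brL 1 0 0 y; rewrite !scale1r addr0 => <-.
  have brN1 x y : br (- x) y = - br x y.
    by have := brL (-1) x 0 y; rewrite addr0 br0 addr0 !scaleN1r.
  have brN2 x y : br x (- y) = - br x y.
    by rewrite brA brN1 -brA.
  have Jac : br v (br w z) = br w (br v z) + br (br v w) z.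
    have := brJ v w z.
    rewrite [br z (br v w)]brA [br z v]brA brN2 => H.
    by apply/eqP; rewrite -subr_eq0 -H opprD addrA eqxx.
  rewrite Jac raddfD dadd !scalerA scalerDr.
  rewrite [X in X - _]addrAC subrr add0r -scalerBl -[RHS]scaleNr; congr (_ *: _).
  rewrite mulr_algl scalerA -scalerBl -scaleNr; congr (_ *: _).
  by field.
- rewrite Hvw !Nvh -!dN -!dadd -!raddfN -!raddfD /= -acB subrr raddf0 d0.
  by [].
- by rewrite Hvf !Nfw nab0 Nvw nabK Nfw scaler0 !subr0.
- by rewrite Hvf !Nfh nab0 Nvh Nfh !subr0.
- by rewrite Hff !Nfw !nab0 nabla0 !subr0.
- by rewrite Hff !Nfh !nab0 nabla0 !subr0.
Qed.
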